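(* Let $q>1$ and $0<u<1$. Consider the following random procedure (Affine Young Tableau Algorithm). Step 1 (Young Tableau Algorithm): start with $N=1$ and $\lambda$ the empty partition, and independent coins indexed by $i\ge1$, coin $i$ showing heads with probability $u/q^i$. Repeatedly flip coin $N$: if tails, set $N\leftarrow N+1$; if heads, choose a column $S$ with $\Pr(S=1)=\frac{q^{N-\lambda'_1}-1}{q^N-1}$ and $\Pr(S=s)=\frac{q^{N-\lambda'_s}-q^{N-\lambda'_{s-1}}}{q^N-1}$ for $s>1$, add one box to column $S$ of $\lambda$, and flip coin $N$ again. Let $\lambda$ be the resulting partition (the limit of this process). Step 2: choose $S$ with $\Pr(S=1)=q^{-\lambda'_1}$ and $\Pr(S=s)=q^{-\lambda'_s}-q^{-\lambda'_{s-1}}$ for $s>1$, and add one box to column $S$ of $\lambda$. Then the output partition is distributed according to $N_{u,q}$.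
   Context: For a partition $\lambda$, $\lambda'_s$ denotes the length of column $s$ of its diagram (the $s$-th part of the conjugate partition; $\lambda'_s=0$ beyond the last column); ''adding a box to column $s$'' increases $\lambda'_s$ by one (the stated probabilities vanish whenever this would not give a partition). $N_{u,q}(\lambda)=\prod_{r\ge1}(1-u/q^r)\frac{u^{|\lambda|-1}(q^{\lambda'_1}-1)}{\prod_i q^{(\lambda'_i)^2}(\frac1q)_{m_i(\lambda)}}$ for partitions $\lambda$ of positive integers, where $m_i(\lambda)$ is the multiplicity of part $i$ and $(\frac1q)_i=\prod_{j=1}^i(1-q^{-j})$. *)

(* Defs.v *)
From HB Require Import structures.
From mathcomp Require Import all_boot all_order all_algebra.
From mathcomp Require Import all_classical all_reals all_analysis.
Set Implicit Arguments. Unset Strict Implicit. Unset Printing Implicit Defensive.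
Import Order.TTheory GRing.Theory Num.Theory.
Local Open Scope ring_scope.

(* A partition is represented by its sequence of parts, nonincreasing and
   positive (canonical representation, so Leibniz equality = equality of
   partitions). *)
Definition is_partition (l : seq nat) : bool :=
  sorted geq l && all (fun p => 0 < p)%N l.

Definition psize (l : seq nat) : nat := sumn l.

(* lambda'_s = length of column s (s >= 1); 0 beyond the last column. *)
Definition col (l : seq nat) (s : nat) : nat := count (fun p => s <= p)%N l.

Definition ncols (l : seq nat) : nat := head 0%N l.

Definition mult (l : seq nat) (i : nat) : nat := count (pred1 i) l.

(* Adding a box to column s (s >= 1): the row of index lambda'_s (0-based)
   gets length s (it had length s-1, or did not exist when s = 1).  This is
   a partition whenever s = 1 or lambda'_{s-1} > lambda'_s; in the other
   cases the probabilities below vanish. *)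
Definition add_box (l : seq nat) (s : nat) : seq nat := set_nth 0%N l (col l s) s.

Section Algo.
Variables (R : realType) (q u : R).

Definition yta_colprob (N : nat) (l : seq nat) (s : nat) : R :=
  if s == 1%N then (q ^+ N / q ^+ col l 1 - 1) / (q ^+ N - 1)
  else (q ^+ N / q ^+ col l s - q ^+ N / q ^+ col l s.-1) / (q ^+ N - 1).

Definition step2_colprob (l : seq nat) (s : nat) : R :=
  if s == 1%N then (q ^+ col l 1)^-1
  else (q ^+ col l s)^-1 - (q ^+ col l s.-1)^-1.

Definition coin (N : nat) : R := u / q ^+ N.

(* Columns s > ncols l + 1 have probability 0 and are omitted. *)
Definition yta_step (x : (nat * seq nat) * R) : seq ((nat * seq nat) * R) :=
  let: ((N, l), w) := x in
  ((N.+1, l), w * (1 - coin N)) ::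
  [seq ((N, add_box l s), w * coin N * yta_colprob N l s) | s <- iota 1 (ncols l).+1].

(* Distribution (finitely supported, as a weighted list of states) of the
   state (N, lambda) after t flips, starting from N = 1, lambda = empty. *)
Fixpoint yta_dist (t : nat) : seq ((nat * seq nat) * R) :=
  if t is t'.+1 then flatten [seq yta_step x | x <- yta_dist t'] else [:: ((1%N, [::]), 1)].

Definition ayta_prob (t : nat) (nu : seq nat) : R :=
  \sum_(x <- yta_dist t)
     \sum_(s <- iota 1 (ncols x.1.2).+1)
        (add_box x.1.2 s == nu)%:R * x.2 * step2_colprob x.1.2 s.

Definition qpoch (i : nat) : R := \prod_(1 <= j < i.+1) (1 - (q ^+ j)^-1).

Definition inf_prod : R := limn (fun n => \prod_(1 <= r < n.+1) (1 - u / q ^+ r)).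

(* N_{u,q}(lambda); the product over i >= 1 is finite since the factors are
   1 for i > lambda_1. *)
Definition Nuq (l : seq nat) : R :=
  inf_prod * (u ^+ (psize l).-1 * (q ^+ col l 1 - 1)) /
  \prod_(1 <= i < (ncols l).+1) (q ^+ ((col l i) ^ 2) * qpoch (mult l i)).

End Algo.

(* Main.v *)
From Pilot Require Import Defs.
From HB Require Import structures.
From mathcomp Require Import all_boot all_order all_algebra.
From mathcomp Require Import all_classical all_reals all_analysis.
From mathcomp Require Import zify ring lra.
Import Order.TTheory GRing.Theory Num.Theory numFieldNormedType.Exports.
Import Pilot.Defs.

Set Implicit Arguments. Unset Strict Implicit. Unset Printing Implicit Defensive.
Lemma partP l : reflect ((forall i, i.+1 < size l -> nth 0 l i.+1 <= nth 0 l i) /\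
   (forall i, i < size l -> 0 < nth 0 l i)) (is_partition l).
Proof.
apply: (iffP andP) => [[/sortedP H1 /all_nthP H2]|[H1 H2]]; split.
- by move=> i /(H1 0).
- by move=> i /(H2 0).
- by apply/(sortedP 0).
- by apply/(all_nthP 0).
Qed.

Lemma col_nth l j i : sorted geq l -> 0 < j -> (i < col l j) = (j <= nth 0 l i).
Proof.
elim: l i => [|a l IH] i /=; first by rewrite nth_nil; case: j.
move=> Hs Hj.
have Hall : all (fun b => b <= a) l.
  by apply: (order_path_min (leT:=geq)) => // x y z h1 h2; apply: leq_trans h2 h1.
have Hsl : sorted geq l by apply: (path_sorted Hs).
case: (leqP j a) => Hja.
- case: i => [|i] /=; first by rewrite Hja.
  by rewrite add1n ltnS IH.
- have -> : col l j = 0.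
    apply/eqP; rewrite -leqn0 leqNgt -has_count; apply/hasP => -[x Hx /= Hjx].
    by move/allP: Hall => /(_ x Hx) Hxa; lia.
  case: i => [|i] /=; first by apply/esym/negbTE; rewrite -ltnNge.
  apply/esym/negbTE; rewrite -ltnNge.
  case: (ltnP i (size l)) => Hi; last by rewrite nth_default.
  by move/all_nthP: Hall => /(_ 0 i Hi) /=; lia.
Qed.

Lemma nat_pref_eq a b : (forall i, (i < a) = (i < b)) -> a = b.
Proof. move=> H; have := H a; have := H b; rewrite !ltnn; lia. Qed.

Lemma col_char l j c : sorted geq l -> 0 < j ->
  (forall i, (i < c) = (j <= nth 0 l i)) -> col l j = c.
Proof. by move=> Hs Hj H; apply: nat_pref_eq => i; rewrite H col_nth. Qed.

Lemma col_anti l j j' : j <= j' -> col l j' <= col l j.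
Proof. move=> H; apply: sub_count => x /=; lia. Qed.

Lemma col_size l j : col l j <= size l.
Proof. exact: count_size. Qed.

Lemma col1_size l : is_partition l -> col l 1 = size l.
Proof. by case/andP=> _ Ha; apply/eqP; rewrite -all_count. Qed.

Lemma col_ncols l j : is_partition l -> 0 < j -> (0 < col l j) = (j <= ncols l).
Proof. by case/andP=> Hs _ Hj; rewrite col_nth //; case: l {Hs}. Qed.

Lemma part_inj l1 l2 : is_partition l1 -> is_partition l2 ->
  (forall j, 0 < j -> col l1 j = col l2 j) -> l1 = l2.
Proof.
move=> H1 H2 H.
have Hsz : size l1 = size l2 by rewrite -!col1_size // H.
apply: (eq_from_nth (x0:=0)) => // i Hi.
have Hi2 : i < size l2 by rewrite -Hsz.
move: (H1) (H2) => /partP[_ P1] /partP[_ P2].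
case/andP: H1 => S1 _; case/andP: H2 => S2 _.
have A := P1 i Hi; have B := P2 i Hi2.
have E j : 0 < j -> (j <= nth 0 l1 i) = (j <= nth 0 l2 i).
  by move=> Hj; rewrite -!col_nth // H.
apply/eqP; rewrite eqn_leq; apply/andP; split.
- by rewrite -(E _ A).
- by rewrite (E _ B).
Qed.
Definition addable (l : seq nat) (s : nat) : bool := (s == 1) || (col l s < col l s.-1).
Definition corner (l : seq nat) (s : nat) : bool := (0 < s) && (col l s.+1 < col l s).
Definition rem_box (l : seq nat) (s : nat) : seq nat :=
  mkseq (fun i => if i == (col l s).-1 then s.-1 else nth 0 l i)
        (if s == 1 then (col l s).-1 else size l).

Lemma nth_add_box l s i : nth 0 (add_box l s) i = if i == col l s then s else nth 0 l i.
Proof. by rewrite /add_box nth_set_nth /=. Qed.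

Section AddBox.
Variables (l : seq nat) (s : nat).
Hypotheses (Hl : is_partition l) (Hs : 0 < s) (Ha : addable l s).
Let p := col l s.
Let Ssort : sorted geq l. Proof. by case/andP: Hl. Qed.
Lemma ab_lt i : i < p -> s <= nth 0 l i.
Proof. by rewrite /p col_nth. Qed.
Lemma ab_ge i : p <= i -> nth 0 l i < s.
Proof. by move=> H; rewrite ltnNge -col_nth // -leqNgt. Qed.
Lemma ab_gt1 : 1 < s -> p < size l /\ nth 0 l p = s.-1.
Proof.
move=> H1; move: Ha; rewrite /addable; case: eqP => [E|_] /=; first lia.
move=> H; have Hs1 : 0 < s.-1 by lia.
split; first by apply: leq_trans H (col_size _ _).
have := ab_ge (leqnn p); move: H; rewrite -/p col_nth // => H; lia.
Qed.
Lemma ab_eq1 : s = 1 -> p = size l.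
Proof. by move=> E; rewrite /p E col1_size. Qed.
Lemma size_add_box : size (add_box l s) = if s == 1 then (size l).+1 else size l.
Proof.
rewrite /add_box size_set_nth -/p; case: eqP => E.
- by rewrite ab_eq1 //; lia.
- have [H _] : p < size l /\ nth 0 l p = s.-1 by apply: ab_gt1; lia.
  lia.
Qed.
Lemma part_add_box : is_partition (add_box l s).
Proof.
have Hsz := size_add_box.
move/partP: Hl => [P1 P2].
apply/partP; split => i; rewrite Hsz => Hi; rewrite !nth_add_box -/p.
- case: (eqVneq i.+1 p) => E1.
  + have -> : (i == p) = false by apply/negbTE; lia.
    by apply: ab_lt; lia.
  case: (eqVneq i p) => E2.
  + by apply: ltnW; apply: ab_ge; lia.
  apply: P1; case: eqP Hi => E3 Hi //.
  by move: (ab_eq1 E3); lia.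
- case: (eqVneq i p) => E2 //.
  apply: P2; case: eqP Hi => E3 Hi //.
  by move: (ab_eq1 E3); lia.
Qed.
Lemma col_add_box j : 0 < j -> col (add_box l s) j = col l j + (j == s).
Proof.
move=> Hj; case/andP: part_add_box => S2 _.
apply: col_char => // i; rewrite nth_add_box -/p.
case: (eqVneq i p) => [->|E].
- case: (eqVneq j s) => [->|Ejs]; first by rewrite addn1 ltnSn leqnn.
  rewrite addn0; case: (ltngtP j s) => H; last by rewrite H eqxx in Ejs.
  + have [_ H2] : p < size l /\ nth 0 l p = s.-1 by apply: ab_gt1; lia.
    by rewrite col_nth // H2; lia.
  + by apply/negbTE; rewrite -leqNgt /p col_anti // ltnW.
- rewrite -col_nth //; case: (eqVneq j s) => [->|Ejs]; last by rewrite addn0.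
  by rewrite addn1 ltnS leq_eqVlt -/p (negbTE E).
Qed.
Lemma col_add_box_corner : corner (add_box l s) s.
Proof.
rewrite /corner Hs /= !col_add_box // eqxx (gtn_eqF (ltnSn s)).
have := col_anti l (leqnSn s); lia.
Qed.
End AddBox.
Section RemBox.
Variables (l : seq nat) (s : nat).
Hypotheses (Hl : is_partition l) (Hc : corner l s).
Let p := (col l s).-1.
Let Ssort : sorted geq l. Proof. by case/andP: Hl. Qed.
Let Hs : 0 < s. Proof. by case/andP: Hc. Qed.
Let Hcs : col l s.+1 < col l s. Proof. by case/andP: Hc. Qed.
Let Hp : col l s = p.+1. Proof. rewrite /p; lia. Qed.
Let rb_le i : i <= p -> s <= nth 0 l i.
Proof. by move=> H; rewrite -col_nth // Hp. Qed.
Let rb_gt i : p < i -> nth 0 l i < s.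
Proof. by move=> H; rewrite ltnNge -col_nth // Hp; lia. Qed.
Let rb_p : nth 0 l p = s.
Proof.
have := rb_le (leqnn p); have : ~~ (p < col l s.+1) by lia.
by rewrite col_nth // -ltnNge; lia.
Qed.
Let rb_size : p < size l.
Proof. have := col_size l s; lia. Qed.
Let rb_s1 : s = 1 -> p.+1 = size l.
Proof. by move=> E; rewrite -Hp E col1_size. Qed.
Let sz := if s == 1 then p else size l.
Lemma size_rem_box : size (rem_box l s) = sz.
Proof. by rewrite /rem_box size_mkseq. Qed.
Lemma nth_rem_box i : nth 0 (rem_box l s) i =
  if i < sz then (if i == p then s.-1 else nth 0 l i) else 0.
Proof.
case: ifP => H; first by rewrite /rem_box nth_mkseq.
by rewrite nth_default // size_rem_box leqNgt H.
Qed.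
Lemma part_rem_box : is_partition (rem_box l s).
Proof.
move/partP: Hl => [P1 P2].
have Hsz : sz <= size l by rewrite /sz; case: eqP => // _; lia.
apply/partP; split => i; rewrite size_rem_box => Hi; rewrite !nth_rem_box.
- rewrite Hi (ltn_trans (ltnSn i) Hi).
  case: (eqVneq i.+1 p) => E1.
  + have -> : (i == p) = false by apply/negbTE; lia.
    have := rb_le (ltnW (eq_leq E1)); lia.
  case: (eqVneq i p) => E2.
  + have := rb_gt (i:=i.+1); lia.
  by apply: P1; lia.
- rewrite Hi; case: (eqVneq i p) => E2.
  + move: Hi; rewrite /sz; case: eqP => E3; lia.
  by apply: P2; lia.
Qed.
Lemma col_rem_box j : 0 < j -> col (rem_box l s) j = col l j - (j == s).
Proof.
move=> Hj; case/andP: part_rem_box => S2 _.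
apply: col_char => // i; rewrite nth_rem_box.
have A1 := col_anti l (leqnSn s).
case: ifP => Hi; last first.
  have -> : (j <= 0) = false by lia.
  move: Hi; rewrite /sz; case: eqP => E3 Hi.
  - have H1 : col l 1 = p.+1 by rewrite -E3.
    have H2 : col l 2 < col l 1 by have := Hcs; rewrite E3.
    rewrite E3; case: (eqVneq j 1) => [->|Ej]; first lia.
    have := col_anti l (_ : 2 <= j); lia.
  - have := col_size l j; lia.
case: (eqVneq i p) => [->|E].
- case: (ltngtP j s) => H.
  + have := col_anti l (ltnW H); lia.
  + have := col_anti l (H : s.+1 <= j); lia.
  + rewrite H /=; lia.
- rewrite -col_nth //; case: (eqVneq j s) => [->|Ejs]; last by rewrite subn0.
  lia.
Qed.
Lemma addable_rem_box : addable (rem_box l s) s.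
Proof.
rewrite /addable; case: eqP => //= E.
have Hs1 : 0 < s.-1 by lia.
rewrite !col_rem_box // eqxx.
have -> : (s.-1 == s) = false by lia.
have := col_anti l (leq_pred s); lia.
Qed.
End RemBox.
Lemma add_rem_box l s : is_partition l -> corner l s -> add_box (rem_box l s) s = l.
Proof.
move=> Hl Hc; have Hs : 0 < s by case/andP: Hc.
have Hr := part_rem_box Hl Hc; have Ha := addable_rem_box Hl Hc.
apply: part_inj => //; first exact: part_add_box.
move=> j Hj; rewrite col_add_box // col_rem_box //.
case: eqP => [->|_]; last by rewrite subn0 addn0.
case/andP: Hc => _ H; lia.
Qed.

Lemma rem_add_box l s : is_partition l -> 0 < s -> addable l s -> rem_box (add_box l s) s = l.
Proof.
move=> Hl Hs Ha; have Hp := part_add_box Hl Hs Ha; have Hc := col_add_box_corner Hl Hs Ha.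
apply: part_inj => //; first exact: part_rem_box.
by move=> j Hj; rewrite col_rem_box // col_add_box // addnK.
Qed.

Lemma sumn_set_nth l p s : sumn (set_nth 0 l p s) + nth 0 l p = sumn l + s.
Proof.
elim: l p => [|a l IH] [|p] /=; try lia.
- by elim: p => [|p IHp] /=; lia.
- by have := IH p; lia.
Qed.

Lemma psize_add_box l s : is_partition l -> 0 < s -> addable l s ->
  psize (add_box l s) = (psize l).+1.
Proof.
move=> Hl Hs Ha; have := sumn_set_nth l (col l s) s; rewrite /psize /add_box.
case: (eqVneq s 1) => E.
- rewrite nth_default; last by rewrite E col1_size.
  rewrite E; lia.
- have [_ H] : col l s < size l /\ nth 0 l (col l s) = s.-1 by apply: ab_gt1 => //; lia.
  rewrite H; lia.
Qed.

Lemma psize_rem_box l s : is_partition l -> corner l s -> psize l = (psize (rem_box l s)).+1.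
Proof.
move=> Hl Hc; have Hs : 0 < s by case/andP: Hc.
rewrite -{1}(add_rem_box Hl Hc) psize_add_box //.
- exact: part_rem_box.
- exact: addable_rem_box.
Qed.

Lemma add_box_equiv m l s : is_partition m -> is_partition l -> 0 < s ->
  (addable m s && (add_box m s == l)) = (corner l s && (m == rem_box l s)).
Proof.
move=> Hm Hl Hs; apply/idP/idP.
- case/andP=> Ha /eqP <-; rewrite col_add_box_corner //=.
  by rewrite rem_add_box.
- case/andP=> Hc /eqP ->; rewrite addable_rem_box //=.
  by rewrite add_rem_box.
Qed.

Lemma corner_le_ncols l s : is_partition l -> corner l s -> s <= ncols l.
Proof. move=> Hl /andP[Hs H]; rewrite -col_ncols //; lia. Qed.

Lemma addable_le_ncols l s : is_partition l -> 0 < s -> addable l s -> s <= (ncols l).+1.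
Proof.
move=> Hl Hs; rewrite /addable; case: eqP => [->|E] //= H.
have : 0 < col l s.-1 by lia.
rewrite col_ncols //; lia.
Qed.

Lemma not_addable_col l s : 0 < s -> ~~ addable l s -> col l s = col l s.-1.
Proof.
move=> Hs; rewrite /addable negb_or => /andP[_]; rewrite -leqNgt => H.
have := col_anti l (leq_pred s); lia.
Qed.
Local Open Scope classical_set_scope.
Local Open Scope ring_scope.

Section Real.
Variables (R : realType) (q u : R).
Hypotheses (hq : 1 < q) (hu0 : 0 < u) (hu1 : u < 1).

Lemma q_gt0 : 0 < q. Proof. exact: lt_trans ltr01 hq. Qed.
Lemma q_neq0 : q != 0. Proof. by rewrite gt_eqF // q_gt0. Qed.
Lemma qX_gt0 n : 0 < q ^+ n. Proof. by rewrite exprn_gt0 // q_gt0. Qed.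
Lemma qX_neq0 n : q ^+ n != 0. Proof. by rewrite gt_eqF // qX_gt0. Qed.
Lemma qX_gt1 n : (0 < n)%N -> 1 < q ^+ n.
Proof. by move=> Hn; rewrite exprn_egt1 // -lt0n. Qed.
Lemma qXV_lt1 n : (0 < n)%N -> (q ^+ n)^-1 < 1.
Proof. by move=> Hn; rewrite invf_lt1 ?qX_gt0 // qX_gt1. Qed.
Lemma fac_gt0 n : (0 < n)%N -> 0 < 1 - (q ^+ n)^-1.
Proof. by move=> Hn; rewrite subr_gt0 qXV_lt1. Qed.
Lemma fac_neq0 n : (0 < n)%N -> 1 - (q ^+ n)^-1 != 0.
Proof. by move=> Hn; rewrite gt_eqF // fac_gt0. Qed.

Lemma qpoch_gt0 m : 0 < qpoch q m.
Proof.
rewrite /qpoch big_nat_cond; apply: prodr_gt0 => i /andP[/andP[Hi _] _].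
exact: fac_gt0.
Qed.
Lemma qpochS m : qpoch q m.+1 = qpoch q m * (1 - (q ^+ m.+1)^-1).
Proof. by rewrite /qpoch big_nat_recr. Qed.

Definition Bp (N k : nat) : R := \prod_(j < k) (1 - (q ^+ (N - j))^-1).
Lemma BpS N k : Bp N k.+1 = Bp N k * (1 - (q ^+ (N - k))^-1).
Proof. by rewrite /Bp big_ord_recr. Qed.
Lemma Bp_zero N k : (N < k)%N -> Bp N k = 0.
Proof.
elim: k => [|k IH] // H; rewrite BpS.
case: (ltngtP N k) => H2; first by rewrite IH // mul0r.
- lia.
- by rewrite H2 subnn expr0 invr1 subrr mulr0.
Qed.

Lemma aux_pred e k : (q ^+ (e + k).+1 - q ^+ k) * (1 - (q ^+ e)^-1) =
  (1 - (q ^+ e.+1)^-1) * (q ^+ (e + k).+1 - q ^+ k.+1).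
Proof.
have H1 := qX_neq0 e; have H2 := q_neq0; have H3 := qX_neq0 k.
by rewrite !exprS exprD; field; apply/andP.
Qed.

Lemma Bp_pred N k : (0 < N)%N -> Bp N.-1 k * (q ^+ N - 1) = Bp N k * (q ^+ N - q ^+ k).
Proof.
move=> HN; elim: k => [|k IH]; first by rewrite /Bp !big_ord0 expr0.
rewrite !BpS mulrAC IH -!mulrA; congr (_ * _).
case: (ltnP k N) => Hk.
- have E : N = ((N.-1 - k) + k).+1 by lia.
  have -> : (N - k = (N.-1 - k).+1)%N by lia.
  by move: (aux_pred (N.-1 - k) k); rewrite -E.
- have -> : (N.-1 - k = 0)%N by lia.
  have -> : (N - k = 0)%N by lia.
  by rewrite expr0 invr1 subrr mulr0 mul0r.
Qed.

Lemma Bp_shift N k : (q ^+ N / q ^+ k - 1) * Bp N k = q ^+ N / q ^+ k * Bp N k.+1.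
Proof.
rewrite BpS; case: (ltnP k N) => Hk.
- have E : N = ((N - k) + k)%N by lia.
  rewrite {1 3}E exprD mulfK ?qX_neq0 //.
  have := qX_neq0 (N - k) => H.
  rewrite mulrCA mulrBr mulr1 mulfV //; ring.
- have -> : (N - k = 0)%N by lia.
  rewrite expr0 invr1 subrr !mulr0.
  case: (ltngtP N k) => H; first by rewrite Bp_zero // mulr0.
  + lia.
  + by rewrite H mulfV ?qX_neq0 // subrr mul0r.
Qed.

Definition Dfac (l : seq nat) (i : nat) : R := q ^+ (col l i ^ 2) * qpoch q (col l i - col l i.+1).
Definition Dp l := \prod_(1 <= i < (ncols l).+1) Dfac l i.
Definition Cp l := u ^+ psize l / Dp l.
Definition aa l s : R := 1 - (q ^+ (col l s.-1 - col l s).+1)^-1.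
Definition bb l s : R := q ^+ (2 * col l s).-1 * (1 - (q ^+ (col l s - col l s.+1))^-1).

Lemma Dfac_gt0 l i : 0 < Dfac l i.
Proof. by rewrite /Dfac mulr_gt0 ?qX_gt0 ?qpoch_gt0. Qed.
Lemma Dp_gt0 l : 0 < Dp l.
Proof. by rewrite /Dp prodr_gt0 // => i _; apply: Dfac_gt0. Qed.
Lemma Dp_neq0 l : Dp l != 0.
Proof. by rewrite gt_eqF // Dp_gt0. Qed.

Lemma Dp_ext l n : is_partition l -> (ncols l <= n)%N ->
  Dp l = \prod_(1 <= i < n.+1) Dfac l i.
Proof.
move=> Hl Hn; have H1 : ((ncols l).+1 <= n.+1)%N by lia.
rewrite /Dp [RHS](big_cat_nat (n := (ncols l).+1) _ H1) //=.
have -> : \prod_((ncols l).+1 <= i < n.+1) Dfac l i = 1; last by rewrite mulr1.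
rewrite big_nat_cond big1 // => i /andP[/andP[Hi _] _].
have c0 j : (ncols l < j)%N -> col l j = 0%N.
  move=> Hj; apply/eqP; rewrite -leqn0 leqNgt col_ncols //; lia.
rewrite /Dfac (c0 i) ?(c0 i.+1); try lia.
by rewrite exp0n // subnn expr0 mul1r /qpoch big_nil.
Qed.

Lemma prod_if1 (j n : nat) (c : R) :
  \prod_(1 <= i < n.+1) (if i == j then c else 1) = if (1 <= j <= n)%N then c else 1.
Proof.
elim: n => [|n IH]; first by rewrite big_nil; case: j.
rewrite big_nat_recr //= IH.
case: (eqVneq n.+1 j) => [<-|E].
- have -> : (1 <= n.+1 <= n)%N = false by lia.
  by rewrite leqnn andbT /= mul1r.
- rewrite mulr1; congr (if _ then _ else _); lia.
Qed.

Lemma aux_D K m : q ^+ (K ^ 2) * qpoch q m * (q ^+ (2 * K.+1).-1 * (1 - (q ^+ m.+1)^-1)) =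
  q ^+ (K.+1 ^ 2) * qpoch q m.+1.
Proof.
rewrite qpochS (_ : (K.+1 ^ 2 = K ^ 2 + (2 * K.+1).-1)%N); last by rewrite !expnS expn0; lia.
by rewrite exprD; ring.
Qed.

Lemma Dratio l s : is_partition l -> corner l s ->
  Dp (rem_box l s) * bb l s = Dp l * (if (1 < s)%N then aa l s else 1).
Proof.
move=> Hl Hc; have Hs : (0 < s)%N by case/andP: Hc.
have Hcs : (col l s.+1 < col l s)%N by case/andP: Hc.
have Hm := part_rem_box Hl Hc.
have Hsn := corner_le_ncols Hl Hc.
set n := ncols l.
have Hmn : (ncols (rem_box l s) <= n)%N.
  case E: (ncols (rem_box l s)) => [//|k].
  have : (0 < col (rem_box l s) k.+1)%N by rewrite col_ncols // E.
  rewrite col_rem_box // => H.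
  have : (0 < col l k.+1)%N by lia.
  by rewrite col_ncols.
rewrite (Dp_ext Hm Hmn) (Dp_ext Hl (leqnn n)).
have P1 := prod_if1 s n (bb l s); have P2 := prod_if1 s.-1 n (aa l s).
rewrite (_ : (1 <= s <= n)%N = true) in P1; last by lia.
rewrite (_ : (1 <= s.-1 <= n)%N = (1 < s)%N) in P2; last by lia.
rewrite -P1 -P2 -!big_split /=; apply: eq_big_nat => i /andP[Hi1 Hi2].
have cm j : (0 < j)%N -> col (rem_box l s) j = (col l j - (j == s))%N by apply: col_rem_box.
rewrite /Dfac !cm //.
case: (eqVneq i s) => [->|E1].
- rewrite (gtn_eqF (ltnSn s)) subn0 /=.
  have -> : (s == s.-1) = false by lia.
  rewrite mulr1 /bb.
  have [K EK] : exists K, col l s = K.+1 by exists (col l s).-1; lia.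
  rewrite EK in Hcs *; rewrite subn1 /=.
  have -> : (K.+1 - col l s.+1 = (K - col l s.+1).+1)%N by lia.
  by rewrite aux_D.
- rewrite mulr1 subn0.
  case: (eqVneq i s.-1) => [E4|E4].
  + have -> : i.+1 = s by lia.
    rewrite eqxx /aa -E4.
    have := col_anti l (_ : i <= s)%N => /(_ ltac:(lia)) H.
    have -> : (col l i - (col l s - 1) = (col l i - col l s).+1)%N by lia.
    by rewrite qpochS mulrA.
  + have -> : (i.+1 == s) = false by lia.
    by rewrite subn0 mulr1.
Qed.

Lemma CR l s : is_partition l -> corner l s ->
  Cp (rem_box l s) * (if (1 < s)%N then aa l s else 1) = Cp l * u^-1 * bb l s.
Proof.
move=> Hl Hc; have E := Dratio Hl Hc.
have Hu : u != 0 by rewrite gt_eqF.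
have H1 := Dp_neq0 l; have H2 := Dp_neq0 (rem_box l s).
rewrite /Cp (psize_rem_box Hl Hc) exprS.
set a := (if _ then _ else _) in E *.
have -> : a = Dp (rem_box l s) * bb l s / Dp l by rewrite E mulrC mulKf.
by field; rewrite Hu H1 H2.
Qed.

Lemma diffV K e : (q ^+ K)^-1 - (q ^+ (K + e))^-1 = (q ^+ K)^-1 * (1 - (q ^+ e)^-1).
Proof. by rewrite exprD invfM mulrBr mulr1. Qed.

Lemma qVb l s : is_partition l -> corner l s ->
  (q ^+ (col l s).-1)^-1 * bb l s = q ^+ col l s - q ^+ col l s.+1.
Proof.
move=> Hl /andP[Hs Hcs]; rewrite /bb.
have [K EK] : exists K, col l s = K.+1 by exists (col l s).-1; lia.
rewrite EK in Hcs *.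
have -> : ((2 * K.+1).-1 = K + K.+1)%N by lia.
have E : K.+1 = ((K.+1 - col l s.+1) + col l s.+1)%N by lia.
rewrite exprD /= mulrA mulrA mulVf ?qX_neq0 // mul1r.
set e := (K.+1 - col l s.+1)%N in E *; rewrite E exprD.
have := qX_neq0 e => H.
by field.
Qed.

Lemma step2_rem l s : is_partition l -> corner l s ->
  step2_colprob q (rem_box l s) s = (q ^+ (col l s).-1)^-1 * (if (1 < s)%N then aa l s else 1).
Proof.
move=> Hl Hc; have Hs : (0 < s)%N by case/andP: Hc.
rewrite /step2_colprob; case: (eqVneq s 1) => [E|E].
- by subst s; rewrite (col_rem_box Hl Hc (ltnSn 0)) /= subn1 mulr1.
have Hs1 : (0 < s.-1)%N by lia.
rewrite (col_rem_box Hl Hc Hs) (col_rem_box Hl Hc Hs1) eqxx /= subn1.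
have -> : (1 < s)%N by lia.
have -> : (s.-1 == s) = false by lia.
rewrite subn0 /aa -diffV; congr (_ - _); congr (_^-1); congr (_ ^+ _).
have := col_anti l (leq_pred s); case/andP: Hc => _ H; lia.
Qed.

Definition Ap N := \prod_(1 <= r < N) (1 - coin q u r).
Definition Rp N l := Ap N * Bp N (col l 1) * Cp l.

Lemma qN1_neq0 N : (0 < N)%N -> q ^+ N - 1 != 0.
Proof. by move=> HN; rewrite subr_eq0 gt_eqF // qX_gt1. Qed.

Lemma term_alg N l s : is_partition l -> corner l s -> (0 < N)%N ->
  coin q u N * yta_colprob q N (rem_box l s) s * Rp N (rem_box l s) =
  Ap N * Bp N (col l 1) * Cp l * (q ^+ col l s - q ^+ col l s.+1) / (q ^+ N - 1).
Proof.
move=> Hl Hc HN; have Hs : (0 < s)%N by case/andP: Hc.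
have Hu : u != 0 by rewrite gt_eqF.
have HqN := qX_neq0 N.
have HqN1 := qN1_neq0 HN.
have E2 := CR Hl Hc; rewrite -(qVb Hl Hc).
have E3 := step2_rem Hl Hc.
rewrite /Rp /coin /yta_colprob.
case: (eqVneq s 1) => [E|E].
- subst s; rewrite /= mulr1 in E2 E3; rewrite /=.
  rewrite (col_rem_box Hl Hc (ltnSn 0)) /= subn1.
  have E1 := Bp_shift N (col l 1).-1.
  have Hk : col l 1 = (col l 1).-1.+1.
    by have := col_ncols Hl (ltnSn 0); have := corner_le_ncols Hl Hc; lia.
  rewrite -Hk in E1.
  set X := q ^+ N / q ^+ (col l 1).-1 - 1 in E1 *.
  set B' := Bp N (col l 1).-1 in E1 *.
  transitivity (u / q ^+ N / (q ^+ N - 1) * Ap N * Cp (rem_box l 1) * (X * B')).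
    by rewrite /X; ring.
  rewrite E1 E2; field.
  by rewrite HqN1 HqN Hu !qX_neq0.
- rewrite (col_rem_box Hl Hc (ltnSn 0)).
  have -> : (1 == s) = false by rewrite eq_sym; apply/negbTE.
  rewrite subn0.
  have -> : q ^+ N / q ^+ col (rem_box l s) s - q ^+ N / q ^+ col (rem_box l s) s.-1 =
            q ^+ N * step2_colprob q (rem_box l s) s.
    by rewrite /step2_colprob (negbTE E) mulrBr.
  rewrite E3; have -> : (1 < s)%N by lia.
  rewrite (_ : aa l s = aa l s * 1) ?mulr1 //.
  transitivity (u / q ^+ N / (q ^+ N - 1) * q ^+ N * (q ^+ (col l s).-1)^-1 * Ap N * Bp N (col l 1) *
     (Cp (rem_box l s) * (if (1 < s)%N then aa l s else 1))).
    have -> : (1 < s)%N by lia.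
    by ring.
  rewrite E2; field.
  by rewrite HqN1 HqN Hu !qX_neq0.
Qed.

Lemma col1_pos l : is_partition l -> (0 < psize l)%N -> (0 < col l 1)%N.
Proof. by move=> Hl; rewrite col1_size //; case: l {Hl}. Qed.

Lemma tele_col l : is_partition l ->
  \sum_(s <- iota 1 (ncols l)) (q ^+ col l s - q ^+ col l s.+1) = q ^+ col l 1 - 1.
Proof.
move=> Hl.
have -> : iota 1 (ncols l) = index_iota 1 (ncols l).+1 by rewrite /index_iota subSS subn0.
have H0 : col l (ncols l).+1 = 0%N.
  apply/eqP; rewrite -leqn0 leqNgt col_ncols //; lia.
have T := @telescope_sumr _ 1 (ncols l).+1 (fun k => q ^+ col l k) (ltn0Sn _).
rewrite /= H0 expr0 in T.
rewrite -(opprB 1) -T -sumrN.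
by apply: eq_bigr => i _; rewrite opprB.
Qed.

Lemma alg_step N l : is_partition l -> (0 < N)%N -> (1 < N + psize l)%N ->
  Rp N l = (1 - coin q u N.-1) * Rp N.-1 l +
    \sum_(s <- iota 1 (ncols l)) (corner l s)%:R * (coin q u N * yta_colprob q N (rem_box l s) s) *
       Rp N (rem_box l s).
Proof.
move=> Hl HN HNl.
have HqN1 := qN1_neq0 HN.
set A := Ap N; set B := Bp N (col l 1); set C := Cp l.
have -> : \sum_(s <- iota 1 (ncols l)) (corner l s)%:R * (coin q u N * yta_colprob q N (rem_box l s) s) *
       Rp N (rem_box l s) = A * B * C / (q ^+ N - 1) * (q ^+ col l 1 - 1).
  rewrite -tele_col // mulr_sumr; apply: eq_big_seq => s; rewrite mem_iota => /andP[Hs _].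
  case Hc : (corner l s).
  - by rewrite mul1r term_alg //; rewrite /A /B /C; field.
  - have -> : col l s.+1 = col l s.
      move: Hc; rewrite /corner Hs /= => /negbT; rewrite -leqNgt => H.
      by apply/eqP; rewrite eqn_leq H col_anti.
    by rewrite subrr !mul0r mulr0.
have -> : (1 - coin q u N.-1) * Rp N.-1 l = A * Bp N.-1 (col l 1) * C.
  rewrite /Rp /A /C; case: (eqVneq N 1) => [E|E].
  - have Hk : (0 < col l 1)%N by apply: col1_pos => //; subst N; lia.
    by rewrite E /= Bp_zero // !(mulr0, mul0r).
  - have [M EM] : exists M, N = M.+1 by exists N.-1; lia.
    rewrite EM /= /Ap big_nat_recr /=; last by lia.
    by ring.
have E := Bp_pred (col l 1) HN.
have -> : Bp N.-1 (col l 1) = B * (q ^+ N - q ^+ col l 1) / (q ^+ N - 1).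
  by rewrite -E mulfK.
rewrite /Rp -/A -/B -/C; field.
by [].
Qed.

Definition Wsum t (F : nat * seq nat -> R) := \sum_(x <- yta_dist q u t) x.2 * F x.1.

Lemma Wsum0 F : Wsum 0 F = F (1%N, [::]).
Proof. by rewrite /Wsum /= big_seq1 mul1r. Qed.

Lemma WsumS t F : Wsum t.+1 F = Wsum t (fun y => (1 - coin q u y.1) * F (y.1.+1, y.2) +
  \sum_(s <- iota 1 (ncols y.2).+1) coin q u y.1 * yta_colprob q y.1 y.2 s * F (y.1, add_box y.2 s)).
Proof.
rewrite /Wsum.
change (yta_dist q u t.+1) with (flatten [seq yta_step q u x | x <- yta_dist q u t]).
rewrite big_flatten /= big_map; apply: eq_bigr => [[[N l] w]] _ /=.
rewrite !big_cons big_map /= [RHS]mulrDr [X in _ = _ + X]mulrDr mulr_sumr.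
rewrite !mulrA; congr (_ + (_ + _)).
by apply: eq_bigr => j _; rewrite !mulrA.
Qed.

Lemma Wsum_add t F G : Wsum t (fun y => F y + G y) = Wsum t F + Wsum t G.
Proof. by rewrite /Wsum -big_split; apply: eq_bigr => x _; rewrite mulrDr. Qed.
Lemma Wsum_scale t a F : Wsum t (fun y => a * F y) = a * Wsum t F.
Proof. by rewrite /Wsum mulr_sumr; apply: eq_bigr => x _; rewrite mulrCA. Qed.
Lemma Wsum_sum t (r : seq nat) (F : nat -> nat * seq nat -> R) :
  Wsum t (fun y => \sum_(s <- r) F s y) = \sum_(s <- r) Wsum t (F s).
Proof.
rewrite /Wsum exchange_big /=; apply: eq_bigr => x _; by rewrite mulr_sumr.
Qed.
Lemma Wsum_zero t : Wsum t (fun _ => 0) = 0.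
Proof. by rewrite /Wsum big1 // => x _; rewrite mulr0. Qed.

Lemma colprob_nonadd N l s : (0 < s)%N -> ~~ addable l s -> yta_colprob q N l s = 0.
Proof.
move=> Hs Ha; have E := not_addable_col Hs Ha.
have : s != 1%N by apply: contraNneq Ha => ->.
by rewrite /yta_colprob => /negbTE ->; rewrite E subrr mul0r.
Qed.
Lemma step2_nonadd l s : (0 < s)%N -> ~~ addable l s -> step2_colprob q l s = 0.
Proof.
move=> Hs Ha; have E := not_addable_col Hs Ha.
have : s != 1%N by apply: contraNneq Ha => ->.
by rewrite /step2_colprob => /negbTE ->; rewrite E subrr.
Qed.

Lemma yta_step_mem N l w x : x \in yta_step q u ((N, l), w) ->
  x = ((N.+1, l), w * (1 - coin q u N)) \/
  exists2 s, s \in iota 1 (ncols l).+1 & x = ((N, add_box l s), w * coin q u N * yta_colprob q N l s).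
Proof.
change (yta_step q u ((N, l), w)) with (((N.+1, l), w * (1 - coin q u N)) ::
  [seq ((N, add_box l s), w * coin q u N * yta_colprob q N l s) | s <- iota 1 (ncols l).+1]).
rewrite in_cons => /orP[/eqP ->|/mapP [s Hs ->]]; [by left | by right; exists s].
Qed.

Lemma Inv t x : x \in yta_dist q u t -> x.2 != 0 ->
  [/\ is_partition x.1.2, (x.1.1 + psize x.1.2 = t.+1)%N & (0 < x.1.1)%N].
Proof.
elim: t x => [|t IH] x.
  by rewrite /= inE => /eqP -> _.
change (yta_dist q u t.+1) with (flatten [seq yta_step q u x | x <- yta_dist q u t]).
move=> /flattenP [ys Hys Hx] Hw.
move/mapP: Hys => [[[N l] w] Hy Eys]; subst ys.
have [Ex|[s Hs Ex]] := yta_step_mem Hx; rewrite Ex /= in Hw *.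
- have Hw0 : w != 0 by apply: contraNneq Hw => ->; rewrite mul0r.
  have [/= P1 P2 P3] := IH _ Hy Hw0.
  by split=> //; lia.
- have Hw0 : w != 0 by apply: contraNneq Hw => ->; rewrite !mul0r.
  have [/= P1 P2 P3] := IH _ Hy Hw0.
  have Hs0 : (0 < s)%N by move: Hs; rewrite mem_iota; lia.
  have Ha : addable l s.
    apply: contraNT Hw => Ha; by rewrite colprob_nonadd // mulr0.
  split=> //; first exact: part_add_box.
  rewrite psize_add_box //; lia.
Qed.

Lemma Wsum_eq t F G : (forall N l, is_partition l -> (N + psize l = t.+1)%N -> (0 < N)%N ->
  F (N, l) = G (N, l)) -> Wsum t F = Wsum t G.
Proof.
move=> H; rewrite /Wsum; apply: eq_big_seq => -[[N l] w] Hx.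
case: (eqVneq w 0) => [->|Hw]; first by rewrite !mul0r.
by have [P1 P2 P3] := Inv Hx Hw; rewrite /= H.
Qed.

Lemma sum_add_box (f : nat -> R) m l : is_partition m -> is_partition l ->
  (forall s, (0 < s)%N -> ~~ addable m s -> f s = 0) ->
  \sum_(s <- iota 1 (ncols m).+1) f s * (add_box m s == l)%:R =
  \sum_(s <- iota 1 (ncols l)) (corner l s)%:R * (m == rem_box l s)%:R * f s.
Proof.
move=> Hm Hl Hf.
transitivity (\sum_(s <- iota 1 ((ncols m).+1 + ncols l)) (addable m s && (add_box m s == l))%:R * f s).
  rewrite iotaD big_cat [X in _ = _ + X]big1_seq ?addr0.
  - apply: eq_big_seq => s; rewrite mem_iota => /andP[Hs _].
    case Ha : (addable m s); first by rewrite /= mulrC.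
    by rewrite Hf ?Ha // !mul0r.
  - move=> s /andP[_]; rewrite mem_iota => /andP[Hs _].
    case Ha : (addable m s); last by rewrite mul0r.
    have := addable_le_ncols Hm (_ : 0 < s)%N Ha; lia.
rewrite addnC iotaD big_cat [X in _ + X = _]big1_seq ?addr0.
  apply: eq_big_seq => s; rewrite mem_iota => /andP[Hs _].
  rewrite (add_box_equiv Hm Hl Hs).
  by case: (corner l s); case: (m == rem_box l s); rewrite /= ?mul1r ?mul0r.
move=> s /andP[_]; rewrite mem_iota => /andP[Hs _].
rewrite (add_box_equiv Hm Hl (_ : 0 < s)%N); last by lia.
case Hc : (corner l s); last by rewrite mul0r.
have := corner_le_ncols Hl Hc; lia.
Qed.

Lemma Clm t N l : is_partition l -> (N + psize l = t.+1)%N ->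
  Wsum t (fun y => (y == (N, l))%:R) = Rp N l.
Proof.
elim: t N l => [|t IH] N l Hl HN.
  rewrite Wsum0; case: N HN => [|[|N]] HN.
  - have Hk : (0 < col l 1)%N by apply: col1_pos => //; lia.
    by rewrite /Rp Bp_zero // mulr0 mul0r.
  - have -> : l = [::].
      case: l Hl HN => [//|a l] /andP[_ /= /andP[Ha _]]; rewrite /psize /=; lia.
    by rewrite eqxx /Rp /Ap /Bp /Cp /Dp !big_geq // big_ord0 expr0 !mul1r invr1.
  - lia.
rewrite WsumS.
case: (posnP N) => [N0|HN0].
  have Hk : (0 < col l 1)%N by apply: col1_pos => //; lia.
  rewrite /Rp N0 Bp_zero // mulr0 mul0r.
  transitivity (Wsum t (fun _ => 0)); last exact: Wsum_zero.
  apply: Wsum_eq => M m Hm HMm HM /=.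
  rewrite mulr0 add0r big1 // => s _; rewrite xpair_eqE.
  have -> : (M == 0%N) = false by lia.
  by rewrite mulr0.
rewrite (Wsum_eq (G := fun y => (1 - coin q u N.-1) * (y == (N.-1, l))%:R +
  \sum_(s <- iota 1 (ncols l)) (corner l s)%:R * (coin q u N * yta_colprob q N (rem_box l s) s) *
     (y == (N, rem_box l s))%:R)).
  rewrite Wsum_add Wsum_scale Wsum_sum IH //; last by lia.
  rewrite (alg_step Hl HN0); last by lia.
  congr (_ + _); apply: eq_big_seq => s; rewrite mem_iota => /andP[Hs _].
  rewrite Wsum_scale; case Hc : (corner l s); last by rewrite /= !mul0r.
  rewrite IH //.
  - exact: part_rem_box.
  - by move: HN; rewrite (psize_rem_box Hl Hc); lia.
move=> M m Hm HMm HM /=; congr (_ + _).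
  rewrite !xpair_eqE.
  have -> : (M.+1 == N) = (M == N.-1) by lia.
  by case: eqP => [->|] //=; rewrite !mulr0.
under eq_bigr do rewrite xpair_eqE.
under [in RHS]eq_bigr do rewrite xpair_eqE.
case: (eqVneq M N) => [->|EMN] /=; last first.
  by rewrite !big1 // => s _; rewrite mulr0.
rewrite sum_add_box //.
- apply: eq_bigr => s _; case: eqP => [->|_]; by rewrite ?mulr1 ?mulr0 ?mul0r.
- by move=> s Hs Ha; rewrite colprob_nonadd // mulr0.
Qed.

Lemma ayta_eq t nu : is_partition nu -> (psize nu <= t.+1)%N ->
  ayta_prob q u t nu = \sum_(s <- iota 1 (ncols nu)) (corner nu s)%:R *
     step2_colprob q (rem_box nu s) s * Rp (t.+1 - psize (rem_box nu s)) (rem_box nu s).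
Proof.
move=> Hnu Ht.
have -> : ayta_prob q u t nu = Wsum t (fun y => \sum_(s <- iota 1 (ncols y.2).+1)
    step2_colprob q y.2 s * (add_box y.2 s == nu)%:R).
  rewrite /ayta_prob /Wsum; apply: eq_bigr => x _; rewrite mulr_sumr.
  by apply: eq_bigr => s _; ring.
rewrite (Wsum_eq (G := fun y => \sum_(s <- iota 1 (ncols nu)) (corner nu s)%:R *
     step2_colprob q (rem_box nu s) s * (y.2 == rem_box nu s)%:R)).
  rewrite Wsum_sum; apply: eq_big_seq => s; rewrite mem_iota => /andP [Hs _].
  rewrite Wsum_scale; case Hc : (corner nu s); last by rewrite /= !mul0r.
  congr (_ * _).
  have Hm := part_rem_box Hnu Hc; have Hp := psize_rem_box Hnu Hc.
  rewrite -(@Clm t (t.+1 - psize (rem_box nu s))%N _ Hm); last by lia.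
  apply: Wsum_eq => M m Hm' HMm HM /=; rewrite xpair_eqE.
  case: eqP => [E|]; last by rewrite andbF.
  by subst m; have -> : M == (t.+1 - psize (rem_box nu s))%N by lia.
move=> M m Hm HMm HM /=.
rewrite sum_add_box //.
- apply: eq_bigr => s _; case: eqP => [->|_]; by rewrite ?mulr1 ?mulr0 ?mul0r.
- by move=> s Hs Ha; rewrite step2_nonadd // mul0r.
Qed.

Lemma mult_col l i : mult l i = (col l i - col l i.+1)%N.
Proof.
rewrite /mult /col; elim: l => [//|a l IH] /=.
have := col_anti l (leqnSn i); rewrite /col => H.
rewrite IH; case: (ltngtP a i) => Hai /=; try lia.
Qed.

Lemma P_dec n : \prod_(1 <= r < n.+2) (1 - u / q ^+ r) <= \prod_(1 <= r < n.+1) (1 - u / q ^+ r).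
Proof.
rewrite big_nat_recr //= ler_piMr //.
- rewrite big_nat_cond; apply: prodr_ge0 => r /andP[/andP[Hr _] _].
  rewrite subr_ge0 ler_pdivrMr ?qX_gt0 // mul1r; apply: ltW; apply: lt_le_trans hu1 _.
  by apply: ltW; apply: qX_gt1.
- by rewrite gerBl divr_ge0 // ?ltW // qX_gt0.
Qed.

Lemma Ap_cvg : Ap @ \oo --> inf_prod q u.
Proof.
rewrite -(cvg_shiftn 1).
set P := fun n => \prod_(1 <= r < n.+1) (1 - u / q ^+ r).
have -> : [sequence Ap (n + 1)]_n = P.
  by apply/funext => n; rewrite /= addn1.
have Hdec : {homo P : n m / (n <= m)%N >-> m <= n}.
  move=> n m /subnK <-; elim: (m - n)%N => [|k IH] //=.
  apply: le_trans _ IH; rewrite addSn; exact: P_dec.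
have Hlb : has_lbound (range P).
  exists 0 => x [n _ <-]; rewrite /P big_nat_cond; apply: prodr_ge0 => r /andP[/andP[Hr _] _].
  rewrite subr_ge0 ler_pdivrMr ?qX_gt0 // mul1r; apply: ltW; apply: lt_le_trans hu1 _.
  by apply: ltW; apply: qX_gt1.
exact: (nonincreasing_is_cvgn Hdec Hlb).
Qed.

Lemma qinv_cvg k : (fun n => (q ^+ (n - k))^-1) @ \oo --> 0.
Proof.
have H1 : `|q^-1| < 1.
  rewrite ger0_norm ?invr_ge0 ?ltW ?q_gt0 // invf_lt1 ?q_gt0 //.
have -> : (fun n => (q ^+ (n - k))^-1) = (GRing.exp q^-1 \o subn^~ k).
  by apply/funext => n /=; rewrite exprVn.
exact: (cvg_comp _ _ (cvg_subnr k) (cvg_expr H1)).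
Qed.

Lemma Bp_cvg k : (fun n => Bp n k) @ \oo --> (1 : R).
Proof.
elim: k => [|k IH].
  by rewrite (_ : (fun n => Bp n 0) = fun=> 1); [exact: cvg_cst | apply/funext => n; rewrite /Bp big_ord0].
have H := cvgM IH (cvgB (cvg_cst (1:R)) (qinv_cvg k)).
rewrite subr0 mulr1 in H.
have -> : (fun n => Bp n k.+1) = ((fun n => Bp n k) \* ((fun=> 1) - (fun n => (q ^+ (n - k))^-1))).
  by apply/funext => n /=; rewrite BpS.
exact: H.
Qed.

Lemma hinf a p : (fun t => ((t + a).+1 - p)%N) @ \oo --> \oo.
Proof.
move=> P [n _ Pn]; exists (p + n)%N => //= m le_m.
by apply: Pn; rewrite /=; move: le_m; rewrite /=; lia.
Qed.

Lemma cvg_sumseq (r : seq nat) (f : nat -> nat -> R) (L : nat -> R) :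
  (forall s, s \in r -> f s @ \oo --> L s) ->
  (fun t => \sum_(s <- r) f s t) @ \oo --> \sum_(s <- r) L s.
Proof.
elim: r => [|a r IH] H.
  rewrite big_nil (_ : (fun t => _) = fun=> 0); first exact: cvg_cst.
  by apply/funext => t; rewrite big_nil.
rewrite big_cons (_ : (fun t => _) = f a \+ (fun t => \sum_(s <- r) f s t)).
  apply: cvgD; first by apply: H; rewrite mem_head.
  by apply: IH => s Hs; apply: H; rewrite in_cons Hs orbT.
by apply/funext => t; rewrite big_cons.
Qed.


Lemma final_ident nu : is_partition nu -> (0 < psize nu)%N ->
  \sum_(s <- iota 1 (ncols nu)) (corner nu s)%:R * step2_colprob q (rem_box nu s) s *
    (inf_prod q u * 1 * Cp (rem_box nu s)) = Nuq q u nu.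
Proof.
move=> Hnu Hp; have Hu : u != 0 by rewrite gt_eqF.
transitivity (\sum_(s <- iota 1 (ncols nu)) inf_prod q u * Cp nu * u^-1 *
   (q ^+ col nu s - q ^+ col nu s.+1)).
  apply: eq_big_seq => s; rewrite mem_iota => /andP[Hs _].
  case Hc : (corner nu s).
  - rewrite step2_rem // -(qVb Hnu Hc) /=.
    have E := CR Hnu Hc.
    transitivity (inf_prod q u * (q ^+ (col nu s).-1)^-1 *
      (Cp (rem_box nu s) * (if (1 < s)%N then aa nu s else 1))); first by ring.
    by rewrite E; ring.
  - have -> : col nu s.+1 = col nu s.
      move: Hc; rewrite /corner Hs /= => /negbT; rewrite -leqNgt => H.
      by apply/eqP; rewrite eqn_leq H col_anti.
    by rewrite subrr /= !mul0r mulr0.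
rewrite -mulr_sumr tele_col // /Nuq.
have -> : \prod_(1 <= i < (ncols nu).+1) (q ^+ (col nu i ^ 2) * qpoch q (mult nu i)) = Dp nu.
  by apply: eq_bigr => i _; rewrite mult_col.
have Hd := Dp_neq0 nu.
rewrite /Cp (_ : psize nu = (psize nu).-1.+1); last by lia.
rewrite exprSr /=; field.
by rewrite Hd Hu.
Qed.

Lemma main_cvg nu : is_partition nu -> (0 < psize nu)%N ->
  (fun t => ayta_prob q u t nu) @ \oo --> Nuq q u nu.
Proof.
move=> Hnu Hp; rewrite -final_ident // -(cvg_shiftn (psize nu)).
have -> : [sequence ayta_prob q u (n + psize nu) nu]_n = (fun t =>
   \sum_(s <- iota 1 (ncols nu)) (corner nu s)%:R * step2_colprob q (rem_box nu s) s *
     Rp ((t + psize nu).+1 - psize (rem_box nu s)) (rem_box nu s)).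
  by apply/funext => t /=; rewrite ayta_eq //; lia.
apply: cvg_sumseq => s _.
set h := fun t => ((t + psize nu).+1 - psize (rem_box nu s))%N.
have Hh : h @ \oo --> \oo by apply: hinf.
have HA : (Ap \o h) @ \oo --> inf_prod q u := cvg_comp _ _ Hh Ap_cvg.
have HB : ((fun n => Bp n (col (rem_box nu s) 1)) \o h) @ \oo --> (1:R) := cvg_comp _ _ Hh (Bp_cvg _).
have H := cvgM (cvg_cst ((corner nu s)%:R * step2_colprob q (rem_box nu s) s))
   (cvgM (cvgM HA HB) (cvg_cst (Cp (rem_box nu s)))).
have -> : (fun t => (corner nu s)%:R * step2_colprob q (rem_box nu s) s * Rp (h t) (rem_box nu s)) =
  (fun=> (corner nu s)%:R * step2_colprob q (rem_box nu s) s) \*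
    (((Ap \o h) \* ((fun n => Bp n (col (rem_box nu s) 1)) \o h)) \* (fun=> Cp (rem_box nu s))).
  by apply/funext => t.
exact: H.
Qed.
End Real.

Theorem theorem3p6 (R : realType) (q u : R) (hq : 1 < q) (hu0 : 0 < u) (hu1 : u < 1)
  (nu : seq nat) (hnu : is_partition nu) (hpos : (0 < psize nu)%N) :
  (fun t => ayta_prob q u t nu) @ \oo --> Nuq q u nu.
Proof. exact: main_cvg. Qed.
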